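(* The InDC method (with $M$ uniform quadrature nodes excluding the left-most point) constructed with stiffly accurate IRK methods with invertible coefficient matrices in the prediction and correction steps can be considered again as an implicit Runge–Kutta method, which is stiffly accurate and whose Butcher coefficient matrix $A$ is invertible.
   Context: InDC-IRK method for an ODE $y'=F(y)$ over one step $[t_n,t_n+H]$: nodes $\tau_m=t_n+mh$, $h=H/M$; $\alpha_j$ ($j=1,\dots,M$) the Lagrange basis polynomials of degree $M-1$ for $\tau_1,\dots,\tau_M$; $S^m(\bar w)=\frac1h\sum_jw_j\int_{\tau_m}^{\tau_{m+1}}\alpha_j$, $S^{c_{mi}}(\bar w)=\frac1h\sum_jw_j\int_{\tau_m}^{\tau_m+c_ih}\alpha_j$, $P^{c_{mi}}(\bar w)=\sum_jw_j\alpha_j(\tau_m+c_ih)$. Prediction: IRK method (tableau $A^{(0)},b^{(0)},c^{(0)}$) on each substep with step $h$. Correction $k=1,\dots,K$ (tableau $(a_{ij}),(b_i),(c_i)$): $y^{(k)}_0=y_n$, $Y_{mi}=y^{(k)}_m+hS^{c_{mi}}(\bar F^{(k-1)})+h\sum_ja_{ij}\Delta K_{mj}$, $y^{(k)}_{m+1}=y^{(k)}_m+hS^m(\bar F^{(k-1)})+h\sum_ib_i\Delta K_{mi}$, $\Delta K_{mi}=F(Y_{mi})-P^{c_{mi}}(\bar F^{(k-1)})$, $\bar F^{(k-1)}=(F(y^{(k-1)}_j))_{j=1}^M$; output $y^{(K)}_M$. A RK method is stiffly accurate if $b^T=e_s^TA$ (last row of $A$ equals $b^T$). *)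

(* Defs.v *)
From mathcomp Require Import all_boot all_order all_algebra.
Set Implicit Arguments. Unset Strict Implicit. Unset Printing Implicit Defensive.
Import Order.TTheory GRing.Theory Num.Theory.
Local Open Scope ring_scope.

Section InDC.
Variable R : realFieldType.

Definition poly_integral (p : {poly R}) (a b : R) : R :=
  \sum_(i < size p) p`_i * (b ^+ i.+1 - a ^+ i.+1) / (i.+1)%:R.

Definition stiffly_accurate (s : nat) (A : 'M[R]_s.+1) (b : 'I_s.+1 -> R) : Prop :=
  forall j : 'I_s.+1, A ord_max j = b j.

Definition substep (M : nat) (H : R) : R := H / M%:R.
Definition node (M : nat) (tn H : R) (m : nat) : R := tn + m%:R * substep M H.

(* Lagrange basis polynomial alpha_j (j : 'I_M corresponds to node tau_{j+1})
   of degree M-1 for the nodes tau_1, ..., tau_M. *)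
Definition lagr (M : nat) (tn H : R) (j : 'I_M) : {poly R} :=
  \prod_(l < M | l != j)
     (('X - (node M tn H l.+1)%:P) *
      ((node M tn H j.+1 - node M tn H l.+1)^-1)%:P).

Variable d : nat.
Notation V := 'rV[R]_d.

Definition S_int (M : nat) (tn H : R) (m : nat) (w : 'I_M -> V) : V :=
  (substep M H)^-1 *:
    \sum_(j < M) poly_integral (lagr tn H j) (node M tn H m) (node M tn H m.+1) *: w j.

Definition S_c (M : nat) (tn H : R) (m : nat) (ci : R) (w : 'I_M -> V) : V :=
  (substep M H)^-1 *:
    \sum_(j < M) poly_integral (lagr tn H j) (node M tn H m)
                    (node M tn H m + ci * substep M H) *: w j.

Definition P_c (M : nat) (tn H : R) (m : nat) (ci : R) (w : 'I_M -> V) : V :=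
  \sum_(j < M) (lagr tn H j).[node M tn H m + ci * substep M H] *: w j.

(* yout is an output y^{(K)}_M of one step of the InDC method (prediction with
   the tableau (A0,b0), K corrections with the tableau (A,b,c)) applied to
   y' = F(y) on [t_n, t_n + H] from y_n, i.e. there are values of all the
   (implicitly defined) unknowns satisfying all the defining equations.
   y k m = y^{(k)}_m, Yp m i = prediction stage i on substep m,
   Yc k m i = Y_{mi} in correction sweep k. *)
Definition InDC_output (M K : nat)
    (s0 : nat) (A0 : 'M[R]_s0.+1) (b0 : 'I_s0.+1 -> R)
    (s : nat) (A : 'M[R]_s.+1) (b : 'I_s.+1 -> R) (c : 'I_s.+1 -> R)
    (F : V -> V) (tn H : R) (yn yout : V) : Prop :=
  let h := substep M H in
  exists (y : nat -> nat -> V) (Yp : nat -> 'I_s0.+1 -> V)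
         (Yc : nat -> nat -> 'I_s.+1 -> V),
    let Fbar k := fun j : 'I_M => F (y k j.+1) in
        y 0%N 0%N = yn /\
        (forall m i, (m < M)%N ->
           Yp m i = y 0%N m + h *: \sum_(j < s0.+1) A0 i j *: F (Yp m j)) /\
        (forall m, (m < M)%N ->
           y 0%N m.+1 = y 0%N m + h *: \sum_(i < s0.+1) b0 i *: F (Yp m i)) /\
        (forall k, (1 <= k <= K)%N -> y k 0%N = yn) /\
        (forall k m i, (1 <= k <= K)%N -> (m < M)%N ->
           Yc k m i = y k m + h *: S_c tn H m (c i) (Fbar k.-1)
             + h *: \sum_(j < s.+1) A i j *:
                      (F (Yc k m j) - P_c tn H m (c j) (Fbar k.-1))) /\
        (forall k m, (1 <= k <= K)%N -> (m < M)%N ->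
           y k m.+1 = y k m + h *: S_int tn H m (Fbar k.-1)
             + h *: \sum_(i < s.+1) b i *:
                      (F (Yc k m i) - P_c tn H m (c i) (Fbar k.-1))) /\
        yout = y K M.

Definition RK_output (N : nat) (A : 'M[R]_N) (b : 'I_N -> R)
    (F : V -> V) (H : R) (yn yout : V) : Prop :=
  exists Y : 'I_N -> V,
    (forall i, Y i = yn + H *: \sum_(j < N) A i j *: F (Y j)) /\
    yout = yn + H *: \sum_(i < N) b i *: F (Y i).

End InDC.

(* Main.v *)
Require Import Defs.
From mathcomp Require Import all_boot all_order all_algebra.
From mathcomp Require Import perm ring lra zify.
Set Implicit Arguments. Unset Strict Implicit. Unset Printing Implicit Defensive.
Import Order.TTheory GRing.Theory Num.Theory.
Local Open Scope ring_scope.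

Section Analytic.
Variable R : realFieldType.

Definition prim (p : {poly R}) : {poly R} :=
  \sum_(i < size p) (p`_i / (i.+1)%:R) *: 'X^(i.+1).

Lemma prim_deriv p : (prim p)^`() = p.
Proof.
rewrite /prim raddf_sum /=.
rewrite -[RHS]coefK poly_def; apply: eq_bigr => i _.
rewrite derivZ derivXn /= -scaler_nat scalerA; congr (_ *: _).
by rewrite -mulrA mulVf ?mulr1 // pnatr_eq0.
Qed.

Lemma PI_prim (p : {poly R}) (a b : R) : poly_integral p a b = (prim p).[b] - (prim p).[a].
Proof.
rewrite /poly_integral /prim !horner_sum -sumrB; apply: eq_bigr => i _.
rewrite !hornerZ !hornerXn; ring.
Qed.

Lemma deriv0_const (Q : {poly R}) : Q^`() = 0 -> Q = (Q`_0)%:P.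
Proof.
move=> dQ; apply/polyP => i; rewrite coefC.
case: i => [//|i].
have := congr1 (fun p : {poly R} => p`_i) dQ.
rewrite coef_deriv coef0 => /eqP; rewrite mulrn_eq0 /= => /eqP ->.
by [].
Qed.

Lemma PI_anti (p Q : {poly R}) (a b : R) : Q^`() = p -> poly_integral p a b = Q.[b] - Q.[a].
Proof.
move=> dQ; rewrite PI_prim.
have : (Q - prim p)^`() = 0 by rewrite derivB dQ prim_deriv subrr.
move/deriv0_const => E.
have EQ : Q = prim p + ((Q - prim p)`_0)%:P by rewrite -E addrC subrK.
rewrite EQ !hornerD !hornerC; ring.
Qed.

Lemma poly_eval_eq (p q : {poly R}) : (forall x, p.[x] = q.[x]) -> p = q.
Proof.
move=> H; apply/eqP; rewrite -subr_eq0; apply/negPn/negP => nz.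
have : (size [seq i%:R : R | i <- iota 0 (size (p - q)%R)] < size (p - q)%R)%N.
  apply: max_poly_roots nz _ _.
    by apply/allP => x /mapP [i _ ->]; rewrite /root !hornerE H subrr.
  rewrite map_inj_uniq ?iota_uniq // => i j /eqP; rewrite eqr_nat => /eqP //.
by rewrite size_map size_iota ltnn.
Qed.

Variable M' : nat.
Local Notation M := M'.+1.

Lemma substepMM : substep M (M%:R : R) = 1.
Proof. by rewrite /substep divff // pnatr_eq0. Qed.

Lemma substep_neq0 (H : R) : H != 0 -> substep M H != 0.
Proof. by move=> nH; rewrite /substep mulf_neq0 // invr_eq0 pnatr_eq0. Qed.

Lemma lagr_eval (tn H : R) (j : 'I_M) x : H != 0 ->
  (lagr tn H j).[x] = (lagr 0 (M%:R) j).[(x - tn) / substep M H].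
Proof.
move=> nH; have nh := substep_neq0 nH.
rewrite /lagr !horner_prod; apply: eq_bigr => l _.
rewrite !hornerM !hornerXsubC !hornerC /node substepMM.
set h := substep M H; set u := (x - tn) / h.
have E1 : x - (tn + (l.+1)%:R * h) = (u - (0 + (l.+1)%:R * 1)) * h.
  by rewrite /u; field.
have E2 : (tn + (j.+1)%:R * h) - (tn + (l.+1)%:R * h) =
   ((0 + (j.+1)%:R * 1) - (0 + (l.+1)%:R * 1)) * h by ring.
by rewrite E1 E2 invfM mulrACA divff // !mulr1.
Qed.

Lemma lagr_comp (tn H : R) (j : 'I_M) : H != 0 ->
  lagr tn H j = lagr 0 (M%:R) j \Po ((substep M H)^-1 *: ('X - tn%:P)).
Proof.
move=> nH; apply: poly_eval_eq => x.
by rewrite horner_comp hornerZ hornerXsubC lagr_eval // mulrC.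
Qed.

Lemma PI_comp (G : {poly R}) (h tn a b : R) : h != 0 ->
  poly_integral (G \Po (h^-1 *: ('X - tn%:P))) a b =
  h * poly_integral G (h^-1 * (a - tn)) (h^-1 * (b - tn)).
Proof.
move=> nh.
rewrite (PI_anti (Q := h *: (prim G \Po (h^-1 *: ('X - tn%:P))))); last first.
  rewrite derivZ deriv_comp prim_deriv derivZ derivXsubC -scalerAr mulr1.
  by rewrite scalerA divff // scale1r.
rewrite PI_prim !hornerZ !horner_comp !hornerZ !hornerXsubC; ring.
Qed.

Lemma SC_eq (tn H : R) (m : nat) (ci : R) (j : 'I_M) : H != 0 ->
  poly_integral (lagr tn H j) (node M tn H m) (node M tn H m + ci * substep M H)
  = substep M H * poly_integral (lagr 0 (M%:R) j) (node M 0 (M%:R) m)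
                    (node M 0 (M%:R) m + ci * substep M (M%:R)).
Proof.
move=> nH; have nh := substep_neq0 nH.
rewrite lagr_comp // PI_comp //; congr (_ * poly_integral _ _ _);
  by rewrite /node substepMM; field.
Qed.

Lemma PC_eq (tn H : R) (m : nat) (ci : R) (j : 'I_M) : H != 0 ->
  (lagr tn H j).[node M tn H m + ci * substep M H]
  = (lagr 0 (M%:R) j).[node M 0 (M%:R) m + ci * substep M (M%:R)].
Proof.
move=> nH; have nh := substep_neq0 nH.
by rewrite lagr_eval //; congr (_.[_]); rewrite /node substepMM; field.
Qed.
End Analytic.


Section Comb.
Variable R : realFieldType.
Variables (M' K s0 s : nat).
Local Notation M := M'.+1.
Variables (A0 : 'M[R]_s0.+1) (b0 : 'I_s0.+1 -> R)
          (A : 'M[R]_s.+1) (b : 'I_s.+1 -> R) (c : 'I_s.+1 -> R).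

Local Notation T := ('I_M * 'I_s0.+1 + 'I_K * 'I_M * 'I_s.+1)%type.

Definition mu : R := (M%:R)^-1.
Definition SC (m : nat) (ci : R) (j : 'I_M) : R :=
  poly_integral (lagr 0 (M%:R : R) j) (node M 0 (M%:R) m)
     (node M 0 (M%:R) m + ci * substep M (M%:R : R)).
Definition PC (m : nat) (ci : R) (j : 'I_M) : R :=
  (lagr 0 (M%:R : R) j).[node M 0 (M%:R) m + ci * substep M (M%:R : R)].

Definition pst (m : nat) (i : 'I_s0.+1) : T := inl (inord m, i).
Definition cst (k m : nat) (i : 'I_s.+1) : T :=
  if insub k.-1 is Some kk then inr (kk, inord m, i) else inl (inord m, ord0).
Definition lastst (k m : nat) : T :=
  if k is 0 then pst m ord_max else cst k m ord_max.

Fixpoint rowY0 (m : nat) : T -> R :=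
  if m is m'.+1 then fun u => rowY0 m' u +
     mu * \sum_(i < s0.+1) b0 i * (u == pst m' i)%:R
  else fun _ => 0.

Fixpoint rowYc (k m : nat) : T -> R :=
  if m is m'.+1 then fun u => rowYc k m' u +
     mu * (\sum_(j < M) SC m' 1 j * (u == lastst k.-1 j)%:R +
           \sum_(i < s.+1) b i * ((u == cst k m' i)%:R -
               \sum_(l < M) PC m' (c i) l * (u == lastst k.-1 l)%:R))
  else fun _ => 0.

Definition rowY (k m : nat) : T -> R := if k is 0 then rowY0 m else rowYc k m.

Definition rowP (m : nat) (i : 'I_s0.+1) : T -> R := fun u =>
  rowY 0 m u + mu * \sum_(j < s0.+1) A0 i j * (u == pst m j)%:R.

Definition rowC (k m : nat) (i : 'I_s.+1) : T -> R := fun u =>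
  rowY k m u + mu * (\sum_(j < M) SC m (c i) j * (u == lastst k.-1 j)%:R +
      \sum_(j < s.+1) A i j * ((u == cst k m j)%:R -
               \sum_(l < M) PC m (c j) l * (u == lastst k.-1 l)%:R)).

Definition rowS (t : T) : T -> R :=
  match t with
  | inl p => rowP p.1 p.2
  | inr p => rowC p.1.1.+1 p.1.2 p.2
  end.

Hypothesis sA0 : stiffly_accurate A0 b0.
Hypothesis sA : stiffly_accurate A b.
Hypothesis c1 : c ord_max = 1.

Lemma rowP_last m u : rowP m ord_max u = rowY 0 m.+1 u.
Proof.
rewrite /rowP /=; congr (_ + _ * _); apply: eq_bigr => j _; by rewrite sA0.
Qed.

Lemma rowC_last k m u : (0 < k)%N -> rowC k m ord_max u = rowY k m.+1 u.
Proof.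
case: k => [//|k] _; rewrite /rowC /= c1; congr (_ + _ * (_ + _)).
by apply: eq_bigr => j _; rewrite sA.
Qed.

Lemma rowS_pst m i : (m < M)%N -> rowS (pst m i) = rowP m i.
Proof. by move=> mM; rewrite /pst /= inordK. Qed.

Lemma rowS_cst k m i : (0 < k <= K)%N -> (m < M)%N -> rowS (cst k m i) = rowC k m i.
Proof.
case: k => [//|k] /= kK mM; rewrite /cst /= insubT /= inordK //.
Qed.

Lemma rowS_last k m u : (k <= K)%N -> (m < M)%N -> rowS (lastst k m) u = rowY k m.+1 u.
Proof.
case: k => [|k] kK mM.
  by rewrite [lastst _ _]/= rowS_pst // rowP_last.
by rewrite [lastst _ _]/= rowS_cst // rowC_last.
Qed.

Definition blk (t : T) : nat :=
  match t with inl p => val p.1 | inr p => (p.1.1.+1 * M + p.1.2)%N end.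

Lemma blk_pst m i : (m < M)%N -> blk (pst m i) = m.
Proof. by move=> mM; rewrite /pst /= inordK. Qed.
Lemma blk_cst k m i : (0 < k <= K)%N -> (m < M)%N -> blk (cst k m i) = (k * M + m)%N.
Proof. by case: k => [//|k] /= kK mM; rewrite /cst /= insubT /= inordK. Qed.
Lemma blk_last k m : (k <= K)%N -> (m < M)%N -> blk (lastst k m) = (k * M + m)%N.
Proof.
case: k => [|k] kK mM; rewrite [lastst _ _]/=; first by rewrite blk_pst.
by rewrite blk_cst.
Qed.

Lemma delta0 (u t : T) : blk u != blk t -> (u == t)%:R = 0 :> R.
Proof. by case: (u =P t) => [->|//]; rewrite eqxx. Qed.

Lemma rowY_supp k m u : (k <= K)%N -> (m <= M)%N -> (k * M + m <= blk u)%N ->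
  rowY k m u = 0.
Proof.
move=> kK; elim: m => [|m IH] mM hu; first by case: k kK hu.
case: k kK hu IH => [|k] kK hu /= IH.
  rewrite IH ?(ltnW mM) //; last by lia.
  rewrite big1 ?mulr0 ?addr0 // => i _; rewrite delta0 ?mulr0 //.
  rewrite blk_pst //; lia.
rewrite IH ?(ltnW mM) //; last by lia.
have Dl j : (j < M)%N -> (u == lastst k j)%:R = 0 :> R.
  by move=> jM; rewrite delta0 // blk_last ?(ltnW kK) //; nia.
rewrite big1 => [|j _]; last by rewrite Dl ?mulr0.
rewrite big1 ?add0r ?addr0 ?mulr0 // => i _.
rewrite delta0; last by rewrite blk_cst ?kK //; nia.
by rewrite big1 ?subrr ?mulr0 // => l _; rewrite Dl ?mulr0.
Qed.

Lemma rowS_supp t u : (blk t < blk u)%N -> rowS t u = 0.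
Proof.
case: t => [[mm i]|[[kk mm] i]] /= h.
  have mM := ltn_ord mm.
  rewrite /rowP (@rowY_supp 0 mm u) //; first last; [lia|exact: ltnW|].
  rewrite big1 ?mulr0 ?addr0 // => j _; rewrite delta0 ?mulr0 //.
  rewrite blk_pst //; lia.
have kK : (0 < kk.+1 <= K)%N by rewrite /= ltn_ord.
have Dl j : (j < M)%N -> (u == lastst kk j)%:R = 0 :> R.
  by move=> jM; rewrite delta0 // blk_last ?(ltnW (ltn_ord kk)) //; nia.
have mM := ltn_ord mm.
rewrite /rowC (@rowY_supp kk.+1 mm u) ?add0r //; first last; [lia|exact: ltnW|].
rewrite big1 => [|j _]; last by rewrite Dl ?mulr0.
rewrite big1 ?add0r ?addr0 ?mulr0 // => j _.
rewrite delta0; last by rewrite blk_cst //; lia.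
by rewrite big1 ?subrr ?mulr0 // => l _; rewrite Dl ?mulr0.
Qed.

Lemma sum_kron n (a : 'I_n -> R) j : \sum_(j' < n) a j' * (j == j')%:R = a j.
Proof.
rewrite (bigD1 j) //= eqxx mulr1 big1 ?addr0 // => j' nj.
by rewrite eq_sym (negbTE nj) mulr0.
Qed.

Lemma rowS_diag0 (mm : 'I_M) i j : rowS (inl (mm, i)) (inl (mm, j)) = mu * A0 i j.
Proof.
have mM := ltn_ord mm.
rewrite /= /rowP (@rowY_supp 0 mm) //= ?add0r; last exact: ltnW.
rewrite -(sum_kron (A0 i) j); congr (_ * _); apply: eq_bigr => j' _.
congr (_ * _%:R); rewrite /pst inord_val.
by case: (j =P j') => [->|nj]; [rewrite eqxx | case: eqP => // -[E]; case: (nj E)].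
Qed.

Lemma rowS_diag1 (kk : 'I_K) (mm : 'I_M) i j :
  rowS (inr (kk, mm, i)) (inr (kk, mm, j)) = mu * A i j.
Proof.
have kK : (0 < kk.+1 <= K)%N by rewrite /= ltn_ord.
set u : T := inr (kk, mm, j).
have Dl l : (l < M)%N -> (u == lastst kk l)%:R = 0 :> R.
  by move=> jM; rewrite delta0 // blk_last ?(ltnW (ltn_ord kk)) //= ; nia.
have mM := ltn_ord mm.
rewrite /= /rowC (@rowY_supp kk.+1 mm) ?add0r //; last exact: ltnW.
rewrite big1 => [|j' _]; last by rewrite Dl ?mulr0.
rewrite add0r -(sum_kron (A i) j); congr (_ * _); apply: eq_bigr => j' _.
rewrite big1 => [|l _]; last by rewrite Dl ?mulr0.
rewrite subr0; congr (_ * _%:R); rewrite /cst /= valK inord_val /u.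
by case: (j =P j') => [->|nj]; [rewrite eqxx | case: eqP => // -[E]; case: (nj E)].
Qed.

Lemma divmod_eq (a x e f : nat) : (x < M)%N -> (f < M)%N -> (a * M + x = e * M + f)%N ->
  a = e /\ x = f.
Proof.
move=> bM fM E; split.
  have := congr1 (divn^~ M) E; rewrite !divnMDl // !divn_small // !addn0.
  by [].
have := congr1 (modn^~ M) E; rewrite /= modnMDl modnMDl !modn_small //.
Qed.

Lemma blk_eq_inl t (mm : 'I_M) j : blk t = blk (inl (mm, j)) ->
  exists i, t = inl (mm, i).
Proof.
case: t => [[mm' i]|[[kk' mm'] i]] /= E.
  by exists i; congr (inl (_, _)); apply: ord_inj.
have := ltn_ord mm; nia.
Qed.

Lemma blk_eq_inr t (kk : 'I_K) (mm : 'I_M) j : blk t = blk (inr (kk, mm, j)) ->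
  exists i, t = inr (kk, mm, i).
Proof.
case: t => [[mm' i]|[[kk' mm'] i]] /= E.
  have := ltn_ord mm'; nia.
have [E1 E2] := divmod_eq (ltn_ord mm') (ltn_ord mm) E.
exists i; case: E1 => /ord_inj ->; by rewrite (ord_inj E2).
Qed.

Lemma sum_supp n (g : 'I_n -> T) (f : T -> R) : injective g ->
  (forall t, (forall i, t != g i) -> f t = 0) -> \sum_t f t = \sum_i f (g i).
Proof.
move=> gi hf.
transitivity (\sum_t \sum_(i < n) (t == g i)%:R * f t).
  apply: eq_bigr => t _; case: (pickP (fun i => t == g i)) => [i0 /eqP ->| none].
    rewrite (bigD1 i0) //= eqxx mul1r big1 ?addr0 // => i ni.
    by rewrite (inj_eq gi) eq_sym (negbTE ni) mul0r.
  rewrite big1 => [|i _]; last by rewrite none mul0r.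
  by rewrite hf // => i; rewrite none.
rewrite exchange_big; apply: eq_bigr => i _.
rewrite (bigD1 (g i)) //= eqxx mul1r big1 ?addr0 // => t nt.
by rewrite (negbTE nt) mul0r.
Qed.

Hypothesis uA0 : A0 \in unitmx.
Hypothesis uA : A \in unitmx.

Lemma mu_neq0 : mu != 0.
Proof. by rewrite /mu invr_eq0 pnatr_eq0. Qed.

Lemma ker_triv (w : T -> R) : (forall u, \sum_t w t * rowS t u = 0) ->
  forall t, w t = 0.
Proof.
move=> hw t0; apply/eqP; apply/negPn/negP => nz0.
have [ts nzs maxs] := @arg_maxnP T t0 (fun t => w t != 0) blk nz0.
case: ts nzs maxs => [[mm i0]|[[kk mm] i0]] nzs maxs.
  have key j : \sum_i w (inl (mm, i)) * A0 i j = 0.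
    have := hw (inl (mm, j)).
    rewrite (@sum_supp _ (fun i => inl (mm, i))); first last.
    - move=> t nt; case: (ltngtP (blk t) (blk (inl (mm, j)))) => h.
      + by rewrite rowS_supp ?mulr0.
      + case: (eqVneq (w t) 0) => [->|nzt]; first by rewrite mul0r.
        by have := maxs t nzt; move: h => /=; lia.
      + by have [i Et] := blk_eq_inl h; have := nt i; rewrite Et /= eqxx.
    - by move=> i i' [].
    under eq_bigr do rewrite rowS_diag0 mulrCA.
    by rewrite -mulr_sumr => /eqP; rewrite mulf_eq0 (negbTE mu_neq0) /= => /eqP.
  pose z : 'rV_s0.+1 := \row_i w (inl (mm, i)).
  have zA : z *m A0 = 0.
    by apply/matrixP => r j; rewrite [RHS]mxE -(key j) mxE; apply: eq_bigr => i _; rewrite !mxE.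
  have z0 : z = 0 by rewrite -(mulmxK uA0 z) zA mul0mx.
  by move: nzs; have := congr1 (fun z : 'rV_s0.+1 => z 0 i0) z0; rewrite !mxE => ->; rewrite eqxx.
have key j : \sum_i w (inr (kk, mm, i)) * A i j = 0.
  have := hw (inr (kk, mm, j)).
  rewrite (@sum_supp _ (fun i => inr (kk, mm, i))); first last.
  - move=> t nt; case: (ltngtP (blk t) (blk (inr (kk, mm, j)))) => h.
    + by rewrite rowS_supp ?mulr0.
    + case: (eqVneq (w t) 0) => [->|nzt]; first by rewrite mul0r.
      by have := maxs t nzt; move: h => /=; lia.
    + by have [i Et] := blk_eq_inr h; have := nt i; rewrite Et /= eqxx.
  - by move=> i i' [].
  under eq_bigr do rewrite rowS_diag1 mulrCA.
  by rewrite -mulr_sumr => /eqP; rewrite mulf_eq0 (negbTE mu_neq0) /= => /eqP.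
pose z : 'rV_s.+1 := \row_i w (inr (kk, mm, i)).
have zA : z *m A = 0.
  by apply/matrixP => r j; rewrite [RHS]mxE -(key j) mxE; apply: eq_bigr => i _; rewrite !mxE.
have z0 : z = 0 by rewrite -(mulmxK uA z) zA mul0mx.
by move: nzs; have := congr1 (fun z : 'rV_s.+1 => z 0 i0) z0; rewrite !mxE => ->; rewrite eqxx.
Qed.

Variable d : nat.
Local Notation V := 'rV[R]_d.
Variable F : V -> V.

Section L.
Variable Yt : T -> V.
Definition L (r : T -> R) : V := \sum_(u : T) r u *: F (Yt u).

Lemma L_ext r r' : (forall u, r u = r' u) -> L r = L r'.
Proof. by move=> E; apply: eq_bigr => u _; rewrite E. Qed.
Lemma L_add r r' : L (fun u => r u + r' u) = L r + L r'.
Proof. by rewrite /L -big_split; apply: eq_bigr => u _; rewrite scalerDl. Qed.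
Lemma L_sub r r' : L (fun u => r u - r' u) = L r - L r'.
Proof. by rewrite /L -sumrB; apply: eq_bigr => u _; rewrite scalerBl. Qed.
Lemma L_scale a r : L (fun u => a * r u) = a *: L r.
Proof. by rewrite /L scaler_sumr; apply: eq_bigr => u _; rewrite scalerA. Qed.
Lemma L_zero : L (fun _ => 0) = 0.
Proof. by rewrite /L big1 // => u _; rewrite scale0r. Qed.
Lemma L_delta t : L (fun u => (u == t)%:R) = F (Yt t).
Proof.
rewrite /L (bigD1 t) //= eqxx scale1r big1 ?addr0 // => u /negbTE ->.
by rewrite scale0r.
Qed.
Lemma L_sum n (r : 'I_n -> T -> R) :
  L (fun u => \sum_(i < n) r i u) = \sum_(i < n) L (r i).
Proof.
rewrite /L exchange_big /=; apply: eq_bigr => u _; by rewrite scaler_suml.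
Qed.
Lemma L_comb n (a : 'I_n -> R) (t : 'I_n -> T) :
  L (fun u => \sum_(i < n) a i * (u == t i)%:R) = \sum_(i < n) a i *: F (Yt (t i)).
Proof.
rewrite L_sum; apply: eq_bigr => i _.
by rewrite (L_scale (a i) (fun u => (u == t i)%:R)) L_delta.
Qed.

Lemma L_inner (coef cc : 'I_s.+1 -> R) k m :
  L (fun u => \sum_(j < s.+1) coef j * ((u == cst k m j)%:R -
               \sum_(l < M) PC m (cc j) l * (u == lastst k.-1 l)%:R)) =
  \sum_(j < s.+1) coef j *: (F (Yt (cst k m j)) -
               \sum_(l < M) PC m (cc j) l *: F (Yt (lastst k.-1 l))).
Proof.
rewrite L_sum; apply: eq_bigr => j _.
rewrite (L_scale (coef j) (fun u => (u == cst k m j)%:R -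
               \sum_(l < M) PC m (cc j) l * (u == lastst k.-1 l)%:R)).
by rewrite L_sub L_delta L_comb.
Qed.

Lemma L_rowP m i : L (rowP m i) =
  L (rowY 0 m) + mu *: \sum_(j < s0.+1) A0 i j *: F (Yt (pst m j)).
Proof. by rewrite /rowP L_add L_scale L_comb. Qed.

Lemma L_rowY0S m : L (rowY 0 m.+1) =
  L (rowY 0 m) + mu *: \sum_(i < s0.+1) b0 i *: F (Yt (pst m i)).
Proof. by rewrite [rowY 0 m.+1]/= L_add L_scale L_comb. Qed.

Lemma L_rowYcS k m : (0 < k)%N -> L (rowY k m.+1) = L (rowY k m) +
  mu *: (\sum_(j < M) SC m 1 j *: F (Yt (lastst k.-1 j)) +
         \sum_(i < s.+1) b i *: (F (Yt (cst k m i)) -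
               \sum_(l < M) PC m (c i) l *: F (Yt (lastst k.-1 l)))).
Proof.
case: k => [//|k] _.
by rewrite [rowY k.+1 m.+1]/= L_add L_scale L_add L_comb L_inner.
Qed.

Lemma L_rowC k m i : L (rowC k m i) = L (rowY k m) +
  mu *: (\sum_(j < M) SC m (c i) j *: F (Yt (lastst k.-1 j)) +
         \sum_(j < s.+1) A i j *: (F (Yt (cst k m j)) -
               \sum_(l < M) PC m (c j) l *: F (Yt (lastst k.-1 l)))).
Proof. by rewrite /rowC L_add L_scale L_add L_comb L_inner. Qed.

Lemma L_rowY_0 k : L (rowY k 0) = 0.
Proof. by case: k => [|k]; rewrite /= L_zero. Qed.
End L.

Lemma substepE (H : R) : substep M H = H * mu.
Proof. by []. Qed.

Lemma hSc tn H m ci (w : 'I_M -> V) :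
  substep M H *: S_c tn H m ci w = H *: (mu *: \sum_(j < M) SC m ci j *: w j).
Proof.
have [->|nH] := eqVneq H 0.
  by rewrite /substep mul0r !scale0r.
have nh := substep_neq0 M' nH.
rewrite /S_c [LHS]scalerA divff // scale1r [RHS]scalerA -substepE scaler_sumr.
by apply: eq_bigr => j _; rewrite SC_eq // scalerA.
Qed.

Lemma hSint tn H m (w : 'I_M -> V) : S_int tn H m w = S_c tn H m 1 w.
Proof.
rewrite /S_int /S_c; congr (_ *: _); apply: eq_bigr => j _.
congr (poly_integral _ _ _ *: _); rewrite /node mul1r -addn1 natrD; ring.
Qed.

Lemma hPsum tn H m (coef : 'I_s.+1 -> R) (X : 'I_s.+1 -> V) (w : 'I_M -> V) :
  substep M H *: \sum_(i < s.+1) coef i *: (X i - P_c tn H m (c i) w) =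
  H *: (mu *: \sum_(i < s.+1) coef i *: (X i - \sum_(l < M) PC m (c i) l *: w l)).
Proof.
have [->|nH] := eqVneq H 0.
  by rewrite /substep mul0r !scale0r.
rewrite scalerA -substepE; congr (_ *: _); apply: eq_bigr => i _.
congr (_ *: (_ - _)); apply: eq_bigr => l _; by rewrite PC_eq.
Qed.

Lemma core_equiv tn H (yn yout : V) :
  InDC_output M K A0 b0 A b c F tn H yn yout <->
  exists Yt : T -> V, (forall t, Yt t = yn + H *: L Yt (rowS t)) /\
                     yout = yn + H *: L Yt (rowY K M).
Proof.
split.
  move=> [y [Yp [Yc]]] /=.
  move=> [h0 [hYp [hy0 [hyk0 [hYc [hyk hout]]]]]].
  pose Yt (t : T) : V := match t with
     | inl p => Yp p.1 p.2 | inr p => Yc p.1.1.+1 p.1.2 p.2 end.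
  have YtP m i : (m < M)%N -> Yt (pst m i) = Yp m i.
    by move=> mM; rewrite /Yt /pst /= inordK.
  have YtC k m i : (0 < k <= K)%N -> (m < M)%N -> Yt (cst k m i) = Yc k m i.
    by case: k => [//|k] /= kK mM; rewrite /cst /= insubT /= inordK.
  have F1 m : (m < M)%N -> Yp m ord_max = y 0%N m.+1.
    move=> mM; rewrite hYp // hy0 //; congr (_ + _ *: _).
    by apply: eq_bigr => j _; rewrite sA0.
  have F2 k m : (0 < k <= K)%N -> (m < M)%N -> Yc k m ord_max = y k m.+1.
    move=> kK mM; rewrite hYc // hyk // c1 hSint; congr (_ + _ + _ *: _).
    by apply: eq_bigr => j _; rewrite sA.
  have Flast k j : (k <= K)%N -> (j < M)%N -> Yt (lastst k j) = y k j.+1.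
    case: k => [|k] kK jM; rewrite [lastst _ _]/=.
      by rewrite YtP // F1.
    by rewrite YtC // F2.
  have G1 k m ci : (0 < k <= K)%N ->
    \sum_(j < M) SC m ci j *: F (y k.-1 j.+1) =
    \sum_(j < M) SC m ci j *: F (Yt (lastst k.-1 j)).
    move=> kK; apply: eq_bigr => j _; rewrite Flast //.
    by case/andP: kK => _; apply: leq_trans (leq_pred _).
  have G2 k m (coef : 'I_s.+1 -> R) : (0 < k <= K)%N -> (m < M)%N ->
    \sum_(i < s.+1) coef i *: (F (Yc k m i) -
          \sum_(l < M) PC m (c i) l *: F (y k.-1 l.+1)) =
    \sum_(i < s.+1) coef i *: (F (Yt (cst k m i)) -
          \sum_(l < M) PC m (c i) l *: F (Yt (lastst k.-1 l))).
    move=> kK mM; apply: eq_bigr => i _; rewrite YtC //.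
    congr (_ *: (_ - _)); apply: eq_bigr => l _; rewrite Flast //.
    by case/andP: kK => _; apply: leq_trans (leq_pred _).
  have Y0 m : (m <= M)%N -> y 0%N m = yn + H *: L Yt (rowY 0 m).
    elim: m => [_|m IH mM]; first by rewrite h0 L_rowY_0 scaler0 addr0.
    rewrite hy0 // (IH (ltnW mM)) L_rowY0S substepE scalerDr scalerA addrA.
    by congr (_ + _ *: _); apply: eq_bigr => i _; rewrite YtP.
  have Yk k : (0 < k <= K)%N -> forall m, (m <= M)%N ->
      y k m = yn + H *: L Yt (rowY k m).
    move=> kK; have kpos : (0 < k)%N by case/andP: kK.
    elim=> [_|m IH mM]; first by rewrite hyk0 // L_rowY_0 scaler0 addr0.
    rewrite hyk // (IH (ltnW mM)) L_rowYcS // hSint hSc hPsum G1 // G2 //.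
    by rewrite !scalerDr !addrA.
  have Yall k m : (k <= K)%N -> (m <= M)%N -> y k m = yn + H *: L Yt (rowY k m).
    case: k => [|k] kK mM; first exact: Y0.
    by apply: Yk.
  exists Yt; split; last by rewrite hout Yall.
  case=> [[mm i]|[[kk mm] i]] /=.
    rewrite hYp // (Y0 _ (ltnW (ltn_ord mm))) L_rowP substepE scalerDr scalerA addrA.
    by congr (_ + _ *: _); apply: eq_bigr => j _; rewrite YtP.
  have kK : (0 < kk.+1 <= K)%N by rewrite /= ltn_ord.
  rewrite hYc // (Yk _ kK _ (ltnW (ltn_ord mm))) L_rowC hSc hPsum G1 // G2 //.
  by rewrite !scalerDr !addrA.
move=> [Yt [hYt hout]].
pose y k m := yn + H *: L Yt (rowY k m).
have Flast k j : (k <= K)%N -> (j < M)%N -> Yt (lastst k j) = y k j.+1.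
  move=> kK jM; rewrite hYt /y; congr (_ + _ *: _); apply: L_ext => u.
  exact: rowS_last.
have G1 k m ci : (0 < k <= K)%N ->
    \sum_(j < M) SC m ci j *: F (y k.-1 j.+1) =
    \sum_(j < M) SC m ci j *: F (Yt (lastst k.-1 j)).
  move=> kK; apply: eq_bigr => j _; rewrite Flast //.
  by case/andP: kK => _; apply: leq_trans (leq_pred _).
have G2 k m (coef : 'I_s.+1 -> R) : (0 < k <= K)%N ->
    \sum_(i < s.+1) coef i *: (F (Yt (cst k m i)) -
          \sum_(l < M) PC m (c i) l *: F (y k.-1 l.+1)) =
    \sum_(i < s.+1) coef i *: (F (Yt (cst k m i)) -
          \sum_(l < M) PC m (c i) l *: F (Yt (lastst k.-1 l))).
  move=> kK; apply: eq_bigr => i _.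
  congr (_ *: (_ - _)); apply: eq_bigr => l _; rewrite Flast //.
  by case/andP: kK => _; apply: leq_trans (leq_pred _).
exists y, (fun m i => Yt (pst m i)), (fun k m i => Yt (cst k m i)) => /=.
split; first by rewrite /y L_rowY_0 scaler0 addr0.
split.
  move=> m i mM; rewrite hYt rowS_pst // L_rowP /y substepE scalerDr scalerA.
  by rewrite addrA.
split.
  by move=> m mM; rewrite /y L_rowY0S substepE scalerDr scalerA addrA.
split; first by move=> k kK; rewrite /y L_rowY_0 scaler0 addr0.
split.
  move=> k m i kK mM; rewrite hYt rowS_cst // L_rowC hSc hPsum G1 // G2 //.
  by rewrite /y !scalerDr !addrA.
split; last exact: hout.
move=> k m kK mM; have kpos : (0 < k)%N by case/andP: kK.
rewrite hSint hSc hPsum G1 // G2 // /y L_rowYcS //.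
by rewrite !scalerDr !addrA.
Qed.
End Comb.


Unset Implicit Arguments.

Theorem proposition7p2 (R : realFieldType) (M K : nat)
    (s0 : nat) (A0 : 'M[R]_s0.+1) (b0 : 'I_s0.+1 -> R)
    (s : nat) (A : 'M[R]_s.+1) (b : 'I_s.+1 -> R) (c : 'I_s.+1 -> R) :
  (0 < M)%N ->
  stiffly_accurate A0 b0 -> A0 \in unitmx ->
  stiffly_accurate A b -> A \in unitmx -> c ord_max = 1 ->
  exists (N : nat) (AA : 'M[R]_N.+1) (bb : 'I_N.+1 -> R),
    [/\ stiffly_accurate AA bb, AA \in unitmx &
        forall (d : nat) (F : 'rV[R]_d -> 'rV[R]_d) (tn H : R) (yn yout : 'rV[R]_d),
          InDC_output M K A0 b0 A b c F tn H yn yout <-> RK_output AA bb F H yn yout].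
Proof.
case: M => [//|M'] _ sA0 uA0 sA uA c1.
pose T : finType := ('I_M'.+1 * 'I_s0.+1 + 'I_K * 'I_M'.+1 * 'I_s.+1)%type.
have cT : (0 < #|T|)%N by apply/card_gt0P; exists (inl (ord0, ord0)).
pose N := #|T|.-1.
have eN : #|T| = N.+1 by rewrite /N prednK.
pose e0 (i : 'I_N.+1) : T := enum_val (cast_ord (esym eN) i).
pose einv0 (t : T) : 'I_N.+1 := cast_ord eN (enum_rank t).
have e0K : cancel einv0 e0.
  by move=> t; rewrite /e0 /einv0 cast_ordK enum_rankK.
have einv0K : cancel e0 einv0.
  by move=> i; rewrite /e0 /einv0 enum_valK cast_ordKV.
pose tgt : T := lastst M' K s0 s K M'.
pose p := tperm (e0 ord_max) tgt.
pose e (i : 'I_N.+1) : T := p (e0 i).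
pose einv (t : T) : 'I_N.+1 := einv0 (p t).
have eK : cancel einv e by move=> t; rewrite /e /einv e0K tpermK.
have einvK : cancel e einv by move=> i; rewrite /e /einv tpermK einv0K.
have ebij : bijective e by exists einv.
have rI (f : T -> R) : \sum_(t : T) f t = \sum_(i < N.+1) f (e i).
  by rewrite (reindex e) //; apply: onW_bij.
have rIV d (f : T -> 'rV[R]_d) : \sum_(t : T) f t = \sum_(i < N.+1) f (e i).
  by rewrite (reindex e) //; apply: onW_bij.
pose AA : 'M[R]_N.+1 := \matrix_(i, j) rowS A0 b0 A b c (e i) (e j).
pose bb (j : 'I_N.+1) : R := rowY b0 b c K M'.+1 (e j).
exists N, AA, bb; split.
- move=> j; rewrite mxE /e tpermL /bb.
  exact: (rowS_last sA0 sA c1 _ (leqnn K) (ltnSn M')).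
- rewrite -row_free_unit -kermx_eq0; apply/rowV0P => v /sub_kermxP vA.
  have hw u : \sum_(t : T) v 0 (einv t) * rowS A0 b0 A b c t u = 0.
    rewrite -[RHS](_ : (v *m AA) 0 (einv u) = 0); last by rewrite vA mxE.
    rewrite mxE rI; apply: eq_bigr => i _; by rewrite einvK mxE eK.
  have := ker_triv uA0 uA hw => H0.
  apply/matrixP => r q; rewrite ord1 mxE.
  by have := H0 (e q); rewrite einvK.
move=> d F tn H yn yout; rewrite core_equiv //; split.
  move=> [Yt [hYt hout]]; exists (fun i => Yt (e i)); split.
    move=> i; rewrite hYt; congr (_ + _ *: _); rewrite /L rIV.
    by apply: eq_bigr => j _; rewrite mxE.
  by rewrite hout /L rIV.
move=> [Y [hY hout]]; exists (fun t => Y (einv t)); split.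
  move=> t; rewrite hY; congr (_ + _ *: _); rewrite /L rIV.
  by apply: eq_bigr => j _; rewrite mxE eK einvK.
rewrite hout /L rIV; congr (_ + _ *: _); apply: eq_bigr => j _; by rewrite einvK.
Qed.
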